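(* Let $F=\{T_1,\dots,T_n\}$ be a finite family of reduction operators relative to a well-ordered set $(G,<)$. Define $B_1=\emptyset$ and, for $2\le i\le n$, \[B_i=B_{i-1}\cup\{s_{i,g_0}\mid g_0\in\mathrm{red}(U_{i-1}\vee T_i)\},\] with $U_{i-1}$ and $s_{i,g_0}$ as defined in the context. Then $B_n$ is a basis of $\mathrm{syz}(F)$.
   Context: Let $\mathbb{K}$ be a field, $(G,<)$ a well-ordered set and $\mathbb{K}G$ the vector space with basis $G$. For $v\neq 0$, $\mathrm{lt}(v)$ is the greatest element of $G$ appearing with nonzero coefficient in $v$. Extend $<$ to $\mathbb{K}G$: $u<v$ if $u=0$ and $v\neq0$, or if $\mathrm{lt}(u)<\mathrm{lt}(v)$; $u\le v$ means $u<v$ or $u=v$. A reduction operator is an idempotent linear endomorphism $T$ of $\mathbb{K}G$ with $T(g)\le g$ for all $g\in G$; $\mathrm{red}(T)=\{g\in G\mid T(g)\neq g\}$. The elements $g-T(g)$, $g\in\mathrm{red}(T)$, form a basis of $\ker T$; the expression of $v\in\ker T$ in this basis is its $T$-decomposition. For every subspace $V$ there is a unique reduction operator $\ker^{-1}(V)$ with kernel $V$; $T\wedge T'=\ker^{-1}(\ker T+\ker T')$, $T\vee T'=\ker^{-1}(\ker T\cap\ker T')$, and for a finite family $\wedge\{T_1,\dots,T_k\}=T_1\wedge\dots\wedge T_k=\ker^{-1}(\sum\ker T_j)$. For a finite family $F'=\{T_1,\dots,T_k\}$: $\mathbf{ker}(F')=\ker T_1\times\dots\times\ker T_k$; $\pi_{F'}(v_1,\dots,v_k)=v_1+\dots+v_k\in\ker(\wedge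 F')$; $\mathrm{syz}(F')=\ker\pi_{F'}$. For $1\le j\le k$ and $g\in\mathrm{red}(T_j)$, $e_{j,g}$ is the tuple with $g-T_j(g)$ at position $j$ and $0$ elsewhere; these form a basis of $\mathbf{ker}(F')$, well-ordered by $e_{j,g}\sqsubset e_{j',g'}$ iff $j<j'$, or $j=j'$ and $g<g'$. The leading term of a nonzero element of $\mathbf{ker}(F')$ is the $\sqsubset$-greatest $e_{j,g}$ in its expansion, and $\mathrm{lt}(\mathrm{syz}(F'))$ is the set of leading terms of nonzero syzygies. Every $v\in\ker(\wedge F')$ has a unique expression $v=\sum\lambda_{j,g}(g-T_j(g))$ with sum over pairs with $g\in\mathrm{red}(T_j)$ and $e_{j,g}\notin\mathrm{lt}(\mathrm{syz}(F'))$: its canonical decomposition with respect to $F'$. For $2\le i\le n$ let $U_{i-1}=T_1\wedge\dots\wedge T_{i-1}$. For $g_0\in\mathrm{red}(U_{i-1}\vee T_i)$ let $v_{i,g_0}=g_0-(U_{i-1}\vee T_i)(g_0)$, which lies in $\ker U_{i-1}\cap\ker T_i$. Let $\sum_{j,g'}\lambda_{j,g'}(g'-T_j(g'))$ be its canonical decomposition with respect to $\{T_1,\dots,T_{i-1}\}$ and $\sum_g\lambda_g(g-T_i(g))$ its $T_i$-decomposition, and set $s_{i,g_0}=\sum_g\lambda_g e_{i,g}-\sum_{j,g'}\lambda_{j,g'}e_{j,g'}\in\mathbf{ker}(F)$, where the $e_{j,g}$ are viewed in $\mathbf{ker}(F)=\ker T_1\times\dots\times\ker T_n$. *)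

(* Defs.v *)
From HB Require Import structures.
From mathcomp Require Import all_boot all_order ssralg.
From mathcomp Require Import finmap.
From mathcomp.multinomials Require Import monalg.
From Stdlib Require Import ClassicalEpsilon.

Set Implicit Arguments.
Unset Strict Implicit.
Unset Printing Implicit Defensive.

Import Order.TTheory GRing.Theory.
Local Open Scope ring_scope.
Local Open Scope order_scope.

Section ReductionOperators.

Variables (K : fieldType) (d : Order.disp_t) (G : orderType d).

(* KG = the K-vector space with basis G, i.e. finitely supported G -> K;
   << g >> is the basis vector g, v@_g the coefficient of g in v. *)
Local Notation KG := {malg K[G]}.

(* lt(v): the greatest element of the support of v (None iff v = 0). *)
Definition ltm (v : KG) : option G :=
  foldr (fun g o => Some (if o is Some h then Order.max g h else g))
        None (msupp v).

Definition vlt (u v : KG) : bool :=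
  match ltm u, ltm v with
  | None, Some _ => true
  | Some a, Some b => a < b
  | _, _ => false
  end.
Definition vle (u v : KG) : bool := vlt u v || (u == v).

Definition is_redop (T : KG -> KG) : Prop :=
  [/\ (forall (a : K) (u v : KG), T (a *: u + v) = a *: T u + T v),
      (forall v, T (T v) = T v) &
      (forall g : G, vle (T << g >>) << g >>)].

Definition red (T : KG -> KG) (g : G) : Prop := T << g >> != << g >>.

(* ker^{-1}(W): the (unique) reduction operator with kernel W *)
Definition kerinv (W : KG -> Prop) : KG -> KG :=
  epsilon (inhabits id)
    (fun U => is_redop U /\ forall v, U v = 0 <-> W v).

Definition Tdec (T : KG -> KG) (v : KG) : KG :=
  epsilon (inhabits 0)
    (fun mu => (forall g, g \in msupp mu -> red T g) /\
       v = \sum_(g <- msupp mu) mu@_g *: (<< g >> - T << g >>)).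

Section Family.

Variables (n : nat) (T : 'I_n -> KG -> KG).
(* The family F = {T_1, ..., T_n} is indexed (0-based) by 'I_n:
   paper's T_k is T (k-1). *)

(* elements of ker T_1 x ... x ker T_n are tuples in {ffun 'I_n -> KG} *)
Local Notation tup := {ffun 'I_n -> KG}.

Definition e (j : 'I_n) (g : G) : tup :=
  [ffun k => if k == j then << g >> - T j << g >> else 0].

(* coefficient families on the basis e_{j,g} *)
Local Notation coefs := {malg K[('I_n * G)%type]}.

Definition comb (lam : coefs) : tup :=
  \sum_(p <- msupp lam) lam@_p *: e p.1 p.2.

Definition lexlt (p q : 'I_n * G) : bool :=
  ((p.1 < q.1)%N || ((p.1 == q.1) && (p.2 < q.2))).

Definition ltp (lam : coefs) : option ('I_n * G) :=
  foldr (fun p o => Some (if o is Some q then (if lexlt p q then q else p)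
                          else p))
        None (msupp lam).

(* expansions of elements of ker(F') for F' = {T_(0), ..., T_(i-1)} *)
Definition wsupp (i : nat) (lam : coefs) : Prop :=
  forall p, p \in msupp lam -> (p.1 < i)%N /\ red (T p.1) p.2.

Definition ltsyz (i : nat) (p : 'I_n * G) : Prop :=
  exists lam : coefs, [/\ wsupp i lam, comb lam != 0,
     \sum_(j < n) comb lam j = 0 & ltp lam = Some p].

Definition candec (i : nat) (v : KG) : coefs :=
  epsilon (inhabits 0)
    (fun lam => [/\ wsupp i lam,
                    (forall p, p \in msupp lam -> ~ ltsyz i p) &
                    \sum_(j < n) comb lam j = v]).

Definition sumker (i : nat) (v : KG) : Prop :=
  exists x : 'I_n -> KG, (forall j, T j (x j) = 0) /\
    v = \sum_(j < n | (j < i)%N) x j.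

(* U_{i} (0-based: meet of T_(0), ..., T_(i-1)) and U ∨ T_(i) *)
Definition Uop (i : nat) : KG -> KG := kerinv (sumker i).
Definition Jop (i : 'I_n) : KG -> KG :=
  kerinv (fun v => Uop i v = 0 /\ T i v = 0).

Definition vvec (i : 'I_n) (g0 : G) : KG := << g0 >> - Jop i << g0 >>.

Definition svec (i : 'I_n) (g0 : G) : tup :=
  let lamC := candec i (vvec i g0) in
  let mu := Tdec (T i) (vvec i g0) in
  \sum_(g <- msupp mu) mu@_g *: e i g
  - \sum_(p <- msupp lamC) lamC@_p *: e p.1 p.2.

(* B_m (1-based as in the paper): B_0 = B_1 = empty,
   B_{m+1} = B_m ∪ {s_{m+1,g0} | g0 ∈ red(U_m ∨ T_{m+1})} (paper indices) *)
Fixpoint Bset (m : nat) : tup -> Prop :=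
  match m with
  | 0 => fun _ => False
  | m'.+1 => fun x => Bset m' x \/
      exists (i : 'I_n) (g0 : G), [/\ nat_of_ord i = m', (0 < m')%N,
                                     red (Jop i) g0 & x = svec i g0]
  end.

Definition syz (x : tup) : Prop :=
  (forall j, T j (x j) = 0) /\ \sum_(j < n) x j = 0.

End Family.

Definition is_basis (M : lmodType K) (W B : M -> Prop) : Prop :=
  [/\ (forall b, B b -> W b),
      (forall (s : seq M) (c : M -> K), uniq s -> (forall b, b \in s -> B b) ->
         \sum_(b <- s) c b *: b = 0 -> forall b, b \in s -> c b = 0) &
      (forall w, W w -> exists (s : seq M) (c : M -> K),
         (forall b, b \in s -> B b) /\ w = \sum_(b <- s) c b *: b)].

End ReductionOperators.

(* Main.v *)
Require Import Defs.
From HB Require Import structures.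
From mathcomp Require Import all_boot all_order ssralg.
From mathcomp Require Import finmap.
From mathcomp.multinomials Require Import monalg.
From Stdlib Require Import ClassicalEpsilon Classical.

Set Implicit Arguments.
Unset Strict Implicit.
Unset Printing Implicit Defensive.

Import Order.TTheory GRing.Theory.
Local Open Scope ring_scope.
Section Lin.
Variables (K : fieldType) (A : choiceType) (V : lmodType K) (f : A -> V).

Definition lin (lam : {malg K[A]}) : V := \sum_(p <- msupp lam) lam@_p *: f p.

Lemma linEw (D : {fset A}) lam : (msupp lam `<=` D)%fset ->
  lin lam = \sum_(p <- D) lam@_p *: f p.
Proof.
move=> le; rewrite /lin (big_fset_incl _ le) // => x _ /mcoeff_outdom ->.
by rewrite scale0r.
Qed.

Lemma linP a u v : lin (a *: u + v) = a *: lin u + lin v.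
Proof.
pose D := (msupp u `|` msupp v `|` msupp (a *: u + v))%fset.
rewrite !(linEw (D := D)); first last;
  try by apply/fsubsetP => x xi; rewrite /D !in_fsetU xi ?orbT.
rewrite scaler_sumr -big_split /=; apply: eq_bigr => p _.
by rewrite mcoeffD mcoeffZ scalerDl scalerA.
Qed.



Lemma lin_eq0 lam : (forall p, p \in msupp lam -> f p = 0) -> lin lam = 0.
Proof. by move=> H; rewrite /lin big_seq big1 // => p /H ->; rewrite scaler0. Qed.
Lemma lin0 : lin 0 = 0.
Proof. by apply: lin_eq0 => p; rewrite msupp0 in_fset0. Qed.
Lemma linD u v : lin (u + v) = lin u + lin v.
Proof. by have := linP 1 u v; rewrite !scale1r. Qed.

Lemma linZ a u : lin (a *: u) = a *: lin u.
Proof. by rewrite -[a *: u]addr0 linP lin0 addr0. Qed.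

Lemma linN u : lin (- u) = - lin u.
Proof. by have := linZ (-1) u; rewrite !scaleN1r. Qed.

Lemma linB u v : lin (u - v) = lin u - lin v.
Proof. by rewrite linD linN. Qed.

Lemma lin_sum (I : Type) (r : seq I) (P : pred I) (F : I -> {malg K[A]}) :
  lin (\sum_(i <- r | P i) F i) = \sum_(i <- r | P i) lin (F i).
Proof. exact: (big_morph lin linD lin0). Qed.

Lemma linU c k : lin << c *g k >> = c *: f k.
Proof. by rewrite (linEw msuppU_le) big_seq_fset1 mcoeffUU. Qed.


End Lin.

Lemma lin_ext (K : fieldType) (A : choiceType) (V : lmodType K) (f g : A -> V) lam :
  (forall p, p \in msupp lam -> f p = g p) -> lin f lam = lin g lam.
Proof. by move=> H; rewrite /lin !big_seq; apply: eq_bigr => p /H ->. Qed.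

Lemma lin_fB (K : fieldType) (A : choiceType) (V : lmodType K) (f g : A -> V) lam :
  lin (fun p => f p - g p) lam = lin f lam - lin g lam.
Proof. by rewrite /lin -sumrB; apply: eq_bigr => p _; rewrite scalerBr. Qed.

Lemma malgUZ (K : fieldType) (A : choiceType) (c : K) (k : A) :
  << c *g k >> = c *: << k >>.
Proof.
apply/malgP => q; rewrite mcoeffZ !mcoeffU; case: eqP => _.
  by rewrite mulr1. by rewrite mulr0.
Qed.

Lemma malg_lin (K : fieldType) (A : choiceType) (v : {malg K[A]}) :
  v = lin (fun k => << k >>) v.
Proof.
rewrite {1}(monalgE v) /lin; apply: eq_bigr => p _; exact: malgUZ.
Qed.

Lemma msupp_neq (K : fieldType) (A : choiceType) (v : {malg K[A]}) p :
  (p \in msupp v) = (v@_p != 0).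
Proof. by rewrite mcoeff_neq0. Qed.

Lemma msupp_lc (K : fieldType) (A : choiceType) (a : K) (u v : {malg K[A]}) p :
  p \in msupp (a *: u + v) -> p \in msupp u \/ p \in msupp v.
Proof.
rewrite !msupp_neq mcoeffD mcoeffZ.
have [->|] := eqVneq (u@_p) 0; first by rewrite mulr0 add0r; right.
by left.
Qed.

Lemma msupp_B (K : fieldType) (A : choiceType) (u v : {malg K[A]}) p :
  p \in msupp (u - v) -> p \in msupp u \/ p \in msupp v.
Proof.
rewrite -scaleN1r addrC => /msupp_lc [] ?; [right|left]; by [].
Qed.

Lemma msupp_sum (K : fieldType) (A : choiceType) (I : eqType) (r : seq I) (P : pred I)
   (F : I -> {malg K[A]}) p :
  p \in msupp (\sum_(i <- r | P i) F i) -> exists2 i, i \in r & P i /\ p \in msupp (F i).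
Proof.
rewrite msupp_neq raddf_sum /= => H.
apply: NNPP => C; move/eqP: H; apply; rewrite big_seq_cond big1 // => i /andP [ir Pi].
case: (eqVneq (F i)@_p 0) => // h; exfalso; apply: C; exists i => //.
by split => //; rewrite msupp_neq h.
Qed.

Lemma msupp_eq0' (K : fieldType) (A : choiceType) (v : {malg K[A]}) :
  (forall p, p \notin msupp v) -> v = 0.
Proof. by move=> H; apply/malgP => p; rewrite mcoeff0 mcoeff_outdom. Qed.
Lemma seq_max (A : eqType) (lt : A -> A -> Prop) (s : seq A) (Q : A -> Prop) :
  (forall x y z, x \in s -> y \in s -> z \in s -> lt x y -> lt y z -> lt x z) ->
  (forall x y, x \in s -> y \in s -> x != y -> lt x y \/ lt y x) ->
  (exists x, x \in s /\ Q x) ->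
  exists m, [/\ m \in s, Q m & forall y, y \in s -> Q y -> y = m \/ lt y m].
Proof.
elim: s => [|x s IH] Htr Hto [z [zs Qz]]; first by [].
have Htr' : forall x y z, x \in s -> y \in s -> z \in s -> lt x y -> lt y z -> lt x z.
  by move=> a b c ha hb hc; apply: Htr; rewrite inE ?ha ?hb ?hc orbT.
have Hto' : forall x y, x \in s -> y \in s -> x != y -> lt x y \/ lt y x.
  by move=> a b ha hb; apply: Hto; rewrite inE ?ha ?hb orbT.
have [ex|nex] := classic (exists x, x \in s /\ Q x).
  have [m [ms Qm Hm]] := IH Htr' Hto' ex.
  have [Qx|nQx] := classic (Q x).
  - have [xm0|xm] := eqVneq x m.
      subst m; exists x; split; rewrite ?inE ?eqxx // => y; rewrite inE => /orP [/eqP ->|ys]; first by left.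
      by move=> /(Hm y ys).
    have hm : m \in x :: s by rewrite inE ms orbT.
    have [lxm|lmx] := Hto x m (mem_head _ _) hm xm.
      exists m; split; rewrite ?inE ?ms ?orbT // => y; rewrite inE => /orP [/eqP ->|ys]; first by right.
      by move=> /(Hm y ys).
    exists x; split; rewrite ?inE ?eqxx // => y; rewrite inE => /orP [/eqP ->|ys]; first by left.
    move=> /(Hm y ys) [->|lym]; first by right.
    right; apply: (Htr y m x); rewrite ?inE ?ys ?ms ?eqxx ?orbT //.
  - exists m; split; rewrite ?inE ?ms ?orbT // => y; rewrite inE => /orP [/eqP ->|ys] //.
    by move=> /(Hm y ys).
exists x; have Qx : Q x.
  move: zs; rewrite inE => /orP [/eqP <-|zs] //; by exfalso; apply: nex; exists z.
split; rewrite ?inE ?eqxx // => y; rewrite inE => /orP [/eqP ->|ys] Qy; first by left.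
by exfalso; apply: nex; exists y.
Qed.

Section NF.
Variables (K : fieldType) (A : choiceType) (lt : rel A).
Hypotheses (ltwf : well_founded lt) (lt_trans : transitive lt)
  (lt_irr : irreflexive lt) (lt_total : forall x y, x != y -> lt x y || lt y x).
Variable P : {malg K[A]} -> Prop.
Hypotheses (P0 : P 0) (PZD : forall a u v, P u -> P v -> P (a *: u + v)).
Variable L : A -> Prop.
Hypothesis HL : forall p, L p -> exists s, [/\ P s, p \in msupp s &
   forall q, q \in msupp s -> q = p \/ lt q p].

Lemma PD u v : P u -> P v -> P (u + v).
Proof. by move=> ? ?; rewrite -[u]scale1r; apply: PZD. Qed.

Lemma nf_aux (D : A -> Prop) (Ddown : forall q q', lt q q' -> D q' -> D q) p :
  forall lam, (forall q, q \in msupp lam -> D q) ->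
  (forall q, q \in msupp lam -> L q -> q = p \/ lt q p) ->
  exists s, P s /\ forall q, q \in msupp (lam - s) -> ~ L q /\ D q.
Proof.
elim/(well_founded_ind ltwf): p => p IH lam HD Hb.
have [s1 [Ps1 HD1 Hb1]] : exists s1, [/\ P s1, (forall q, q \in msupp (lam - s1) -> D q) &
    (forall q, q \in msupp (lam - s1) -> L q -> lt q p)].
  have [pb|pnb] := classic (p \in msupp lam /\ L p).
    case: pb => plam Lp; have [s [Ps ps Hs]] := HL Lp.
    have sp0 : s@_p != 0 by rewrite -msupp_neq.
    have c0 : (lam - (lam@_p / s@_p) *: s)@_p = 0.
      by rewrite mcoeffB mcoeffZ mulfVK // subrr.
    have DZ q : q \in msupp ((lam@_p / s@_p) *: s) -> q \in msupp s.
      by move/(fsubsetP (msuppZ_le _ _)).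
    exists ((lam@_p / s@_p) *: s); split.
    - by rewrite -[_ *: s]addr0; apply: PZD.
    - move=> q /msupp_B [/HD //|/DZ /Hs [->|]]; first by apply: HD.
      by move=> lqp; apply: Ddown lqp (HD _ plam).
    - move=> q qin Lq; have qp : q != p.
        by apply/eqP => qp; move: qin; rewrite qp msupp_neq c0 eqxx.
      case/msupp_B: qin => [/Hb /(_ Lq) [/eqP|//]|/DZ /Hs [/eqP|//]]; by rewrite (negbTE qp).
  exists 0; split => //; rewrite subr0 //.
  move=> q qin Lq; case: (Hb q qin Lq) => // qp; subst q; by exfalso; apply: pnb.
have [ex|nex] := classic (exists q, q \in msupp (lam - s1) /\ L q).
  have [m [ms Lm Hm]] := @seq_max A (fun x y => lt x y) (msupp (lam - s1)) L
     (fun x y z _ _ _ => @lt_trans y x z)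
     (fun x y _ _ xy => orP (lt_total xy)) ex.
  have [s2 [Ps2 H2]] := IH m (Hb1 m ms Lm) (lam - s1) HD1 Hm.
  exists (s1 + s2); split; first by apply: PD.
  by move=> q; rewrite opprD addrA => /H2.
exists s1; split => // q qin; split; last by apply: HD1.
by move=> Lq; apply: nex; exists q.
Qed.

Lemma nf_exists (D : A -> Prop) (Ddown : forall q q', lt q q' -> D q' -> D q) lam :
  (forall q, q \in msupp lam -> D q) ->
  exists s, P s /\ forall q, q \in msupp (lam - s) -> ~ L q /\ D q.
Proof.
move=> HD.
have [ex|nex] := classic (exists q, q \in msupp lam /\ L q).
  have [m [ms Lm Hm]] := @seq_max A (fun x y => lt x y) (msupp lam) L
     (fun x y z _ _ _ => @lt_trans y x z)
     (fun x y _ _ xy => orP (lt_total xy)) ex.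
  exact: (nf_aux Ddown HD Hm).
exists 0; split => // q; rewrite subr0 => qin; split; last by apply: HD.
by move=> Lq; apply: nex; exists q.
Qed.
End NF.
Lemma mcoeff_lin (K : fieldType) (A : choiceType) (B : choiceType)
  (f : A -> {malg K[B]}) lam q : (lin f lam)@_q = \sum_(p <- msupp lam) lam@_p * (f p)@_q.
Proof. rewrite /lin raddf_sum; by apply: eq_bigr => p _; rewrite /= mcoeffZ. Qed.

Section Red.
Variables (K : fieldType) (d : Order.disp_t) (G : orderType d).
Local Notation KG := {malg K[G]}.

Lemma foldr_max (s : seq G) :
  let F := foldr (fun g o => Some (if o is Some h then Order.max g h else g)) None s in
  (F = None -> s = [::]) /\ forall g, F = Some g -> g \in s /\ forall h, h \in s -> (h <= g)%O.
Proof.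
elim: s => [|x s [IH1 IH2]] //=; split => // g [<-].
case E: (foldr _ _ s) => [h|]; last first.
  by rewrite (IH1 E); split => [|y]; rewrite ?inE ?eqxx // => /eqP ->.
have [hs Hh] := IH2 h E; split.
  by case: (leP x h) => _; rewrite inE ?eqxx ?hs ?orbT.
move=> y; rewrite inE => /orP [/eqP ->|ys]; rewrite le_max ?lexx //.
by rewrite Hh ?orbT.
Qed.

Lemma ltm_None (v : KG) : ltm v = None -> v = 0.
Proof.
rewrite /ltm => /(proj1 (foldr_max _)) E; apply: msupp_eq0' => p.
by apply/negP => pin; move: pin; rewrite -[p \in _]/(p \in (msupp v : seq G)) E.
Qed.

Lemma ltm_Some (v : KG) g : ltm v = Some g ->
  g \in msupp v /\ forall h, h \in msupp v -> (h <= g)%O.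
Proof. by rewrite /ltm => /(proj2 (foldr_max _)). Qed.

Lemma ltm_nz (v : KG) : v != 0 -> exists g, ltm v = Some g.
Proof.
case E: (ltm v) => [g|]; first by exists g.
by rewrite (ltm_None E) eqxx.
Qed.

Lemma ltm_char (v : KG) g : g \in msupp v -> (forall h, h \in msupp v -> (h <= g)%O) ->
  ltm v = Some g.
Proof.
move=> gin H; case E: (ltm v) => [g'|]; last first.
  by move: gin; rewrite (ltm_None E) msupp0 in_fset0.
have [g'in H'] := ltm_Some E; congr Some; apply/eqP; rewrite eq_le H //.
exact: H'.
Qed.

Lemma msupp_U1 (g h : G) : (h \in msupp (<< g >> : KG)) = (h == g).
Proof. by rewrite msuppU oner_eq0 in_fset1. Qed.

Lemma ltm_U (g : G) : ltm (<< g >> : KG) = Some g.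
Proof.
by apply: ltm_char => [|h]; rewrite msupp_U1 // => /eqP ->.
Qed.

Lemma mcoeff_U (g h : G) : (<< g >> : KG)@_h = (g == h)%:R.
Proof. by rewrite mcoeffU. Qed.

Section RedOp.
Variables (T : KG -> KG) (hT : is_redop T).

Lemma TlinP a u v : T (a *: u + v) = a *: T u + T v.
Proof. by case: hT. Qed.
Lemma Tidem v : T (T v) = T v.
Proof. by case: hT. Qed.
Lemma T0 : T 0 = 0.
Proof.
have := TlinP (-1) 0 0; rewrite scaler0 addr0 scaleN1r => E.
by rewrite {1}E addNr.
Qed.
Lemma TD u v : T (u + v) = T u + T v.
Proof. by have := TlinP 1 u v; rewrite !scale1r. Qed.
Lemma TZ a u : T (a *: u) = a *: T u.
Proof. by have := TlinP a u 0; rewrite !addr0 T0 addr0. Qed.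
Lemma TN u : T (- u) = - T u.
Proof. by have := TZ (-1) u; rewrite !scaleN1r. Qed.
Lemma TB u v : T (u - v) = T u - T v.
Proof. by rewrite TD TN. Qed.
Lemma T_sum (I : Type) (r : seq I) (P : pred I) (F : I -> KG) :
  T (\sum_(i <- r | P i) F i) = \sum_(i <- r | P i) T (F i).
Proof. exact: (big_morph T TD T0). Qed.
Lemma T_lin (A : choiceType) (f : A -> KG) lam : T (lin f lam) = lin (fun p => T (f p)) lam.
Proof. by rewrite /lin T_sum; apply: eq_bigr => p _; rewrite TZ. Qed.

Definition redb (g : G) := T << g >> != << g >>.
Definition fv (g : G) : KG := << g >> - T << g >>.

Lemma T_fv g : T (fv g) = 0.
Proof. by rewrite /fv TB Tidem subrr. Qed.

Lemma T_ker v : T v = 0 -> v = lin fv v.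
Proof.
move=> Tv; rewrite /fv lin_fB -T_lin -malg_lin Tv subr0 //.
Qed.

Lemma Tnred g : ~ red T g -> T << g >> = << g >>.
Proof. by rewrite /red => /negP; rewrite negbK => /eqP. Qed.

Lemma Tred_lt g : red T g -> forall h, h \in msupp (T << g >>) -> (h < g)%O.
Proof.
rewrite /red => ng h hin; case: hT => _ _ /(_ g); rewrite /vle (negbTE ng) orbF /vlt ltm_U.
case E: (ltm _) => [a|] // ag; last by move: hin; rewrite (ltm_None E) msupp0 in_fset0.
have [_ Ha] := ltm_Some E; exact: le_lt_trans (Ha _ hin) ag.
Qed.

Lemma fv_coeff_g g : red T g -> (fv g)@_g = 1.
Proof.
move=> rg; rewrite /fv mcoeffB mcoeff_U eqxx mcoeff_outdom ?subr0 //.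
by apply/negP => /(Tred_lt rg); rewrite ltxx.
Qed.

Lemma fv_supp g h : h \in msupp (fv g) -> (h <= g)%O.
Proof.
rewrite /fv => /msupp_B [|]; first by rewrite msupp_U1 => /eqP ->.
have [rg|nrg] := classic (red T g); first by move/(Tred_lt rg)/ltW.
by rewrite (Tnred nrg) msupp_U1 => /eqP ->.
Qed.

Lemma fv_ltm g : red T g -> ltm (fv g) = Some g.
Proof.
move=> rg; apply: ltm_char; last exact: fv_supp.
by rewrite msupp_neq fv_coeff_g // oner_eq0.
Qed.

Lemma ker_ltm_red v g : T v = 0 -> ltm v = Some g -> red T g.
Proof.
move=> Tv E; have [gin Hg] := ltm_Some E; apply: NNPP => nrg.
move: gin; rewrite msupp_neq (T_ker Tv) mcoeff_lin big_seq big1 ?eqxx // => h hin.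
have [->|hg] := eqVneq h g.
  by rewrite /fv (Tnred nrg) subrr mcoeff0 mulr0.
have hltg : (h < g)%O by rewrite lt_neqAle hg Hg.
have [rh|nrh] := classic (red T h); last by rewrite /fv (Tnred nrh) subrr mcoeff0 mulr0.
rewrite /fv mcoeffB mcoeff_U (negbTE hg) (@mcoeff_outdom _ _ _ g) ?subrr ?mulr0 //.
by apply/negP => /(Tred_lt rh) /(lt_trans hltg); rewrite ltxx.
Qed.

Lemma Tdec_ex v : T v = 0 -> exists mu : KG,
  (forall g, g \in msupp mu -> red T g) /\ v = \sum_(g <- msupp mu) mu@_g *: fv g.
Proof.
move=> Tv; pose mu : KG := [malg g in msupp v => if redb g then v@_g else 0].
have muE g : mu@_g = if redb g then v@_g else 0.
  rewrite /mu mcoeffE; case: ifP => // /negbT gn; rewrite mcoeff_outdom //.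
  by case: ifP.
exists mu; split.
  move=> g; rewrite msupp_neq muE; case: ifP => //; by rewrite eqxx.
have sub : (msupp mu `<=` msupp v)%fset.
  apply/fsubsetP => g; rewrite !msupp_neq muE; case: ifP => //; by rewrite eqxx.
rewrite {1}(T_ker Tv) -/(lin fv mu) (@linEw _ _ _ _ (msupp v) v) // (@linEw _ _ _ _ (msupp v) mu) //.
apply: eq_bigr => g _; rewrite muE; case: ifP => // /negbT nrg.
by rewrite /fv (Tnred (fun h => negP nrg h)) subrr !scaler0.
Qed.

Lemma Tdec_spec v : T v = 0 ->
  (forall g, g \in msupp (Tdec T v) -> red T g) /\ v = lin fv (Tdec T v).
Proof.
move=> Tv; rewrite /Tdec; apply: (epsilon_spec (inhabits 0) (fun mu =>
  (forall g, g \in msupp mu -> red T g) /\ v = \sum_(g <- msupp mu) mu@_g *: (<< g >> - T << g >>))).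
exact: Tdec_ex.
Qed.
End RedOp.
End Red.
Section KerInv.
Variables (K : fieldType) (d : Order.disp_t) (G : orderType d).
Hypothesis wf_G : well_founded (fun x y : G => (x < y)%O).
Local Notation KG := {malg K[G]}.
Variable W : KG -> Prop.
Hypotheses (W0 : W 0) (WZD : forall a u v, W u -> W v -> W (a *: u + v)).

Definition LW (g : G) := exists w, [/\ W w, w != 0 & ltm w = Some g].
Definition isNF (v r : KG) := W (v - r) /\ forall q, q \in msupp r -> ~ LW q.

Lemma WB u v : W u -> W v -> W (u - v).
Proof. by move=> Wu Wv; rewrite addrC -scaleN1r; apply: WZD. Qed.

Lemma NF_uniq v r1 r2 : isNF v r1 -> isNF v r2 -> r1 = r2.
Proof.
move=> [W1 H1] [W2 H2]; apply/eqP; rewrite -subr_eq0; apply/negP => /negP nz.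
have [g E] := ltm_nz nz.
have Wd : W (r1 - r2).
  have E' : (v - r2) - (v - r1) = r1 - r2 by rewrite opprB addrC addrA subrK.
  rewrite -E'; exact: WB.
have [gin _] := ltm_Some E.
have Lg : LW g by exists (r1 - r2).
by case/msupp_B: gin => [/H1|/H2].
Qed.

Lemma HLW p : LW p -> exists s, [/\ W s, p \in msupp s &
   forall q, q \in msupp s -> q = p \/ (q < p)%O].
Proof.
move=> [w [Ww nz E]]; have [pin Hp] := ltm_Some E; exists w; split => // q /Hp.
by rewrite le_eqVlt => /orP [/eqP ->|]; [left|right].
Qed.

Lemma nfG (D : G -> Prop) (Ddown : forall q q', (q < q')%O -> D q' -> D q) (lam : KG) :
  (forall q, q \in msupp lam -> D q) ->
  exists s, W s /\ forall q, q \in msupp (lam - s) -> ~ LW q /\ D q.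
Proof.
apply: (@nf_exists K G (fun x y => (x < y)%O) wf_G _ _ W W0 WZD LW HLW D Ddown).
- by move=> x y z; apply: lt_trans.
- by move=> x y; apply: lt_total.
Qed.

Lemma NF_ex v : exists r, isNF v r.
Proof.
have [s [Ws Hs]] := @nfG (fun _ => True) (fun _ _ _ _ => I) v (fun _ _ => I).
exists (v - s); split; first by rewrite opprB addrC subrK.
by move=> q /Hs [].
Qed.

Definition Unf (v : KG) : KG := proj1_sig (constructive_indefinite_description _ (NF_ex v)).
Lemma UnfP v : isNF v (Unf v).
Proof. exact: proj2_sig (constructive_indefinite_description _ (NF_ex v)). Qed.

Lemma Unf_redop : is_redop Unf.
Proof.
split.
- move=> a u v; apply: NF_uniq (UnfP _) _; split.
    have [Wu _] := UnfP u; have [Wv _] := UnfP v.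
    have -> : a *: u + v - (a *: Unf u + Unf v) = a *: (u - Unf u) + (v - Unf v).
      by rewrite scalerBr opprD addrACA.
    exact: WZD.
  move=> q /msupp_lc [qin|qin]; [exact: (proj2 (UnfP u)) qin|exact: (proj2 (UnfP v)) qin].
- move=> v; apply: NF_uniq (UnfP _) _; split; first by rewrite subrr.
  exact: (proj2 (UnfP v)).
- move=> g; have [Lg|nLg] := classic (LW g); last first.
    have -> : Unf << g >> = << g >>.
      apply: NF_uniq (UnfP _) _; split; first by rewrite subrr.
      by move=> q; rewrite msupp_U1 => /eqP ->.
    by rewrite /vle eqxx orbT.
  case: (Lg) => w [Ww nz E]; have [gin Hg] := ltm_Some E.
  pose c := (w@_g)^-1; pose r0 := << g >> - c *: w.
  have wg0 : w@_g != 0 by rewrite -msupp_neq.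
  have Hr0 : forall q, q \in msupp r0 -> (q < g)%O.
    move=> q qin; have qg : q != g.
      apply/eqP => qg; move: qin; rewrite qg msupp_neq /r0 mcoeffB mcoeffZ mcoeff_U eqxx.
      by rewrite mulVf // subrr eqxx.
    case/msupp_B: qin => [|/(fsubsetP (msuppZ_le _ _)) /Hg]; first by rewrite msupp_U1 (negbTE qg).
    by rewrite lt_neqAle qg.
  have [s [Ws Hs]] := @nfG (fun q => (q < g)%O) (fun q q' h1 h2 => lt_trans h1 h2) r0 Hr0.
  have -> : Unf << g >> = r0 - s.
    apply: NF_uniq (UnfP _) _; split; last by move=> q /Hs [].
    have -> : << g >> - (r0 - s) = c *: w + s by rewrite /r0 !opprD !opprK !addrA subrr add0r.
    exact: WZD.
  rewrite /vle /vlt ltm_U; case E2: (ltm (r0 - s)) => [a|]; last by [].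
  have [ain _] := ltm_Some E2; by rewrite (proj2 (Hs a ain)).
Qed.

Lemma Unf_ker v : Unf v = 0 <-> W v.
Proof.
split => [E|Wv]; first by have [] := UnfP v; rewrite E subr0.
apply: NF_uniq (UnfP _) _; split; first by rewrite subr0.
by move=> q; rewrite msupp0 in_fset0.
Qed.
End KerInv.

Lemma kerinvP (K : fieldType) (d : Order.disp_t) (G : orderType d)
  (wf_G : well_founded (fun x y : G => (x < y)%O)) (W : {malg K[G]} -> Prop) :
  W 0 -> (forall a u v, W u -> W v -> W (a *: u + v)) ->
  is_redop (kerinv W) /\ forall v, kerinv W v = 0 <-> W v.
Proof.
move=> W0 WZD; rewrite /kerinv; apply: (epsilon_spec (inhabits id) (fun U =>
  is_redop U /\ forall v, U v = 0 <-> W v)).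
exists (Unf wf_G W0 WZD); split; [exact: Unf_redop|exact: Unf_ker].
Qed.
Lemma lin_comp (K : fieldType) (A : choiceType) (V : lmodType K) n
  (f : A -> {ffun 'I_n -> V}) lam k : (lin f lam) k = lin (fun p => f p k) lam.
Proof. by rewrite /lin sum_ffunE; apply: eq_bigr => p _; rewrite ffunE. Qed.

Section Fam.
Variables (K : fieldType) (d : Order.disp_t) (G : orderType d).
Hypothesis wf_G : well_founded (fun x y : G => (x < y)%O).
Local Notation KG := {malg K[G]}.
Variables (n : nat) (T : 'I_n -> KG -> KG).
Hypothesis redT : forall j, is_redop (T j).
Local Notation tup := {ffun 'I_n -> KG}.

Lemma lexlt_wf : well_founded (fun p q : 'I_n * G => lexlt p q).
Proof.
move=> [i g]; move: {2}(nat_of_ord i) (erefl (nat_of_ord i)) => k.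
elim/ltn_ind: k i g => k IHk i g ik.
elim/(well_founded_ind wf_G): g => g IHg.
constructor => -[j h] /orP [/= ji|/andP [/= /eqP ji hg]].
  by apply: (IHk j) => //; rewrite -ik.
by subst j; apply: IHg.
Qed.

Lemma lexlt_trans : transitive (@lexlt d G n).
Proof.
move=> q p r; rewrite /lexlt => /orP [h1|/andP [/eqP e1 h1]] /orP [h2|/andP [/eqP e2 h2]].
- by rewrite (ltn_trans h1 h2).
- by rewrite -e2 h1.
- by rewrite e1 h2.
- by rewrite e1 e2 eqxx (lt_trans h1 h2) orbT.
Qed.

Lemma lexlt_total (p q : 'I_n * G) : p != q -> lexlt p q || lexlt q p.
Proof.
case: p q => [i g] [j h] /=; rewrite /lexlt /=.
move=> ne; have [ij|ji|ij] := ltngtP i j; [by rewrite /= |by rewrite /= orbT|].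
have eij : i = j by apply: val_inj.
subst j; rewrite eqxx /=; apply: lt_total; apply: contra ne => /eqP ->.
by rewrite eqxx.
Qed.

Lemma lexlt_irr (p : 'I_n * G) : ~~ lexlt p p.
Proof. by rewrite /lexlt ltnn ltxx andbF. Qed.

Lemma foldr_lex (s : seq ('I_n * G)) :
  let F := foldr (fun p o => Some (if o is Some q then (if lexlt p q then q else p) else p))
        None s in
  forall p, F = Some p -> p \in s /\ forall q, q \in s -> q = p \/ lexlt q p.
Proof.
elim: s => [|x s IH] //= p [<-].
case E: (foldr _ _ s) => [q0|]; last first.
  by split => [|y]; rewrite ?inE ?eqxx // => /orP [/eqP ->|]; [left|case: (s) E].
have [q0s Hq0] := IH q0 E.
case: ifP => xq0.
  split; first by rewrite inE q0s orbT.
  move=> y; rewrite inE => /orP [/eqP ->|/Hq0 //]; by right.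
split; first by rewrite inE eqxx.
move=> y; rewrite inE => /orP [/eqP ->|ys]; first by left.
have [xq|xq] := eqVneq x q0.
  subst q0; by have := Hq0 y ys.
have lq0x : lexlt q0 x by move: (lexlt_total xq); rewrite xq0.
case: (Hq0 y ys) => [->|lyq]; right => //; exact: lexlt_trans lyq lq0x.
Qed.

Lemma ltp_Some (lam : {malg K[('I_n * G)%type]}) p : ltp lam = Some p ->
  p \in msupp lam /\ forall q, q \in msupp lam -> q = p \/ lexlt q p.
Proof. by rewrite /ltp => /foldr_lex. Qed.

Lemma eE j g k : e T j g k = if k == j then fv (T j) g else 0.
Proof. by rewrite ffunE. Qed.

Lemma tsum_e j g : \sum_(k < n) e T j g k = fv (T j) g.
Proof.
rewrite (bigD1 j) //= eE eqxx big1 ?addr0 // => k kj.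
by rewrite eE (negbTE kj).
Qed.

Lemma tsum_lin (A : choiceType) (f : A -> tup) lam :
  \sum_(k < n) (lin f lam) k = lin (fun p => \sum_(k < n) f p k) lam.
Proof.
under eq_bigr => k _ do rewrite lin_comp.
rewrite /lin exchange_big /=; apply: eq_bigr => p _; by rewrite scaler_sumr.
Qed.

Lemma tsum_comb lam : \sum_(k < n) comb T lam k = lin (fun p => fv (T p.1) p.2) lam.
Proof.
rewrite -/(lin _ lam) tsum_lin; apply: lin_ext => p _; exact: tsum_e.
Qed.

Lemma e_ker j g k : T k (e T j g k) = 0.
Proof.
rewrite eE; case: eqP => [->|_]; first exact: T_fv.
exact: T0.
Qed.

Lemma BsetP m x : Bset T m x <-> exists (i : 'I_n) (g0 : G),
   [/\ (0 < i)%N, (i < m)%N, red (Jop T i) g0 & x = svec T i g0].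
Proof.
elim: m => [|m IH] /=; first by split => // -[i [g0 []]].
split.
  case=> [/IH [i [g0 [h1 h2 h3 h4]]]|[i [g0 [h1 h2 h3 h4]]]].
    by exists i, g0; split => //; rewrite ltnS ltnW.
  by exists i, g0; split => //; rewrite ?h1.
move=> [i [g0 [h1 h2 h3 h4]]]; move: h2; rewrite ltnS leq_eqVlt => /orP [/eqP im|im].
  by right; exists i, g0; split => //; rewrite -im.
by left; apply/IH; exists i, g0.
Qed.

Lemma sumker0 i : sumker T i 0.
Proof.
exists (fun _ => 0); split => [j|]; first exact: (T0 (redT j)).
by rewrite big1.
Qed.

Lemma sumkerZD i a u v : sumker T i u -> sumker T i v -> sumker T i (a *: u + v).
Proof.
move=> [x [Hx ->]] [y [Hy ->]]; exists (fun j => a *: x j + y j); split.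
  by move=> j; rewrite (TlinP (redT j)) Hx Hy scaler0 addr0.
by rewrite scaler_sumr -big_split.
Qed.

Lemma UopP i : is_redop (Uop T i) /\ forall v, Uop T i v = 0 <-> sumker T i v.
Proof. rewrite /Uop; apply: kerinvP; [exact: wf_G|exact: sumker0|exact: sumkerZD]. Qed.

Lemma JopP (i : 'I_n) : is_redop (Jop T i) /\
  forall v, Jop T i v = 0 <-> (Uop T i v = 0 /\ T i v = 0).
Proof.
have [hU _] := UopP i.
rewrite /Jop; apply: kerinvP; first exact: wf_G.
  by rewrite (T0 hU) (T0 (redT i)).
move=> a u v [h1 h2] [h3 h4].
by rewrite (TlinP hU) (TlinP (redT i)) h1 h2 h3 h4 scaler0 addr0.
Qed.

Lemma wsupp_sub i (lam1 lam2 : {malg K[('I_n * G)%type]}) :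
  wsupp T i lam1 -> wsupp T i lam2 -> wsupp T i (lam1 - lam2).
Proof. by move=> h1 h2 p /msupp_B [/h1|/h2]. Qed.

Lemma wsupp0 i : wsupp T i 0.
Proof. by move=> p; rewrite msupp0 in_fset0. Qed.

Lemma candec_ex (i : nat) v : sumker T i v -> exists lam,
   [/\ wsupp T i lam, (forall p, p \in msupp lam -> ~ ltsyz T i p) &
       \sum_(j < n) comb T lam j = v].
Proof.
move=> [x [Hx ->]].
pose mu j := Tdec (T j) (x j).
pose lam0 := \sum_(j < n | (j < i)%N) lin (fun g => << (j, g) >> : {malg K[('I_n * G)%type]}) (mu j).
have w0 : wsupp T i lam0.
  move=> p /msupp_sum [j _ [ji]]; rewrite /lin => /msupp_sum [g gin [_]].
  move/(fsubsetP (msuppZ_le _ _)); rewrite msuppU oner_eq0 in_fset1 => /eqP -> /=.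
  by split => //; have [H _] := Tdec_spec (redT j) (Hx j); apply: H.
have s0 : \sum_(k < n) comb T lam0 k = \sum_(j < n | (j < i)%N) x j.
  rewrite tsum_comb lin_sum; apply: eq_bigr => j _.
  have [_ ->] := Tdec_spec (redT j) (Hx j).
  rewrite [X in lin _ X]/lin lin_sum; apply: eq_bigr => g _.
  by rewrite linZ linU scale1r.
pose P (s : {malg K[('I_n * G)%type]}) := wsupp T i s /\ \sum_(k < n) comb T s k = 0.
have P0 : P 0.
  split; first exact: wsupp0.
  by rewrite tsum_comb lin0.
have PZD : forall a u w, P u -> P w -> P (a *: u + w).
  move=> a u w [wu su] [wv sv]; split.
    by move=> p /msupp_lc [/wu|/wv].
  by rewrite tsum_comb linP -!tsum_comb su sv scaler0 addr0.
have HL : forall p, ltsyz T i p -> exists s, [/\ P s, p \in msupp s &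
   forall q, q \in msupp s -> q = p \/ lexlt q p].
  move=> p [s [ws _ ss E]]; have [pin Hp] := ltp_Some E; by exists s.
have [s [[ws ss] Hs]] := @nf_exists K _ (@lexlt d G n) lexlt_wf lexlt_trans lexlt_total
   P P0 PZD (ltsyz T i) HL (fun _ => True) (fun _ _ _ _ => I) lam0 (fun _ _ => I).
exists (lam0 - s); split.
- exact: wsupp_sub.
- by move=> p /Hs [].
- by rewrite tsum_comb linB -!tsum_comb s0 ss subr0.
Qed.

Lemma candec_spec (i : nat) v : sumker T i v ->
   wsupp T i (candec T i v) /\ \sum_(j < n) comb T (candec T i v) j = v.
Proof.
move=> h; have := epsilon_spec (inhabits 0) (fun lam => [/\ wsupp T i lam,
    (forall p, p \in msupp lam -> ~ ltsyz T i p) &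
    \sum_(j < n) comb T lam j = v]) (candec_ex h).
by rewrite -/(candec T i v) => -[].
Qed.
End Fam.
Section Main.
Variables (K : fieldType) (d : Order.disp_t) (G : orderType d).
Hypothesis wf_G : well_founded (fun x y : G => (x < y)%O).
Local Notation KG := {malg K[G]}.
Variables (n : nat) (T : 'I_n -> KG -> KG).
Hypothesis redT : forall j, is_redop (T j).
Local Notation tup := {ffun 'I_n -> KG}.

Lemma vvec_ker (i : 'I_n) g0 : Uop T i (vvec T i g0) = 0 /\ T i (vvec T i g0) = 0.
Proof. have [hJ HJ] := JopP wf_G redT i; apply/HJ; exact: (T_fv hJ). Qed.

Lemma vvec_sumker (i : 'I_n) g0 : sumker T i (vvec T i g0).
Proof. by have [_ HU] := UopP wf_G redT i; apply/HU; case: (vvec_ker i g0). Qed.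

Lemma svecE (i : 'I_n) g0 : svec T i g0 =
  lin (e T i) (Tdec (T i) (vvec T i g0)) -
  lin (fun p : 'I_n * G => e T p.1 p.2) (candec T i (vvec T i g0)).
Proof. by []. Qed.

Lemma svec_comp (i : 'I_n) g0 k : svec T i g0 k =
  lin (fun g => e T i g k) (Tdec (T i) (vvec T i g0))
  - lin (fun p => e T p.1 p.2 k) (candec T i (vvec T i g0)).
Proof.
by rewrite svecE !ffunE (lin_comp (e T i)) lin_comp.
Qed.

Lemma svec_low (i : 'I_n) g0 (k : 'I_n) : (i <= k)%N ->
  lin (fun p => e T p.1 p.2 k) (candec T i (vvec T i g0)) = 0.
Proof.
move=> ik; have [ws _] := candec_spec wf_G redT (vvec_sumker i g0).
apply: lin_eq0 => p /ws [p1i _]; rewrite eE; case: eqP => // kp.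
by move: p1i; rewrite -kp ltnNge ik.
Qed.

Lemma svec_gt (i : 'I_n) g0 (k : 'I_n) : (i < k)%N -> svec T i g0 k = 0.
Proof.
move=> ik; rewrite svec_comp (svec_low g0 (ltnW ik)) subr0.
apply: lin_eq0 => g _; rewrite eE; case: eqP => // ki.
by move: ik; rewrite ki ltnn.
Qed.

Lemma svec_i (i : 'I_n) g0 : svec T i g0 i = vvec T i g0.
Proof.
rewrite svec_comp (svec_low g0 (leqnn i)) subr0.
have [_ E] := Tdec_spec (redT i) (proj2 (vvec_ker i g0)).
rewrite [RHS]E; apply: lin_ext => g _; by rewrite eE eqxx.
Qed.

Lemma syz0 : syz T 0.
Proof.
split => [j|]; first by rewrite ffunE (T0 (redT j)).
by rewrite big1 // => j _; rewrite ffunE.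
Qed.

Lemma syzZD a x y : syz T x -> syz T y -> syz T (a *: x + y).
Proof.
move=> [hx sx] [hy sy]; split => [j|].
  by rewrite !ffunE (TlinP (redT j)) hx hy scaler0 addr0.
under eq_bigr => j _ do rewrite !ffunE.
by rewrite big_split /= -scaler_sumr sx sy scaler0 addr0.
Qed.

Lemma svec_syz (i : 'I_n) g0 : syz T (svec T i g0).
Proof.
split => [k|].
  rewrite svec_comp (TB (redT k)) !(T_lin (redT k)).
  by rewrite !lin_eq0 ?subr0 // => p _; rewrite e_ker.
rewrite svecE; under eq_bigr => k _ do rewrite !ffunE.
rewrite sumrB (tsum_lin (e T i)).
have E2 : \sum_(k < n) lin (fun p : 'I_n * G => e T p.1 p.2) (candec T i (vvec T i g0)) k
  = vvec T i g0 := proj2 (candec_spec wf_G redT (vvec_sumker i g0)).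
rewrite E2.
have [_ E] := Tdec_spec (redT i) (proj2 (vvec_ker i g0)).
rewrite [X in _ - X]E; apply/eqP; rewrite subr_eq0; apply/eqP.
by apply: lin_ext => g _; rewrite tsum_e.
Qed.

Definition keyrel (w : tup) (p : 'I_n * G) :=
  [/\ w p.1 != 0, forall j : 'I_n, (p.1 < j)%N -> w j = 0 & ltm (w p.1) = Some p.2].

Lemma keyrel_uniq w p q : keyrel w p -> keyrel w q -> p = q.
Proof.
case: p q => [i g] [j h] [/= n1 z1 l1] [/= n2 z2 l2].
have ij : i = j.
  apply: val_inj => /=; apply/eqP; rewrite eqn_leq (leqNgt i) (leqNgt j).
  apply/andP; split; apply/negP => lt.
  - by move: n1; rewrite (z2 _ lt) eqxx.
  - by move: n2; rewrite (z1 _ lt) eqxx.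
subst j; by move: l1; rewrite l2 => -[->].
Qed.

Lemma key_exists (w : tup) : w != 0 -> exists p, keyrel w p.
Proof.
move=> nz.
have ex : exists j, j \in enum 'I_n /\ w j != 0.
  apply: NNPP => C; move/eqP: nz; apply; apply/ffunP => j; rewrite ffunE.
  apply/eqP; apply: NNPP => h; apply: C; exists j; split; [by rewrite mem_enum|by apply/negP].
have Hto : forall x y : 'I_n, x \in enum 'I_n -> y \in enum 'I_n -> x != y ->
    (x < y)%N \/ (y < x)%N.
  move=> x y _ _ xy; have : (val x != val y) by rewrite (inj_eq val_inj).
  by rewrite neq_ltn => /orP [] ?; [left|right].
have [m [_ wm Hm]] := @seq_max _ (fun a b : 'I_n => (a < b)%N) (enum 'I_n)
   (fun j => w j != 0) (fun x y z _ _ _ h1 h2 => ltn_trans h1 h2) Hto ex.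
have [g E] := ltm_nz wm.
exists (m, g); split => //= j mj.
apply/eqP; apply: contraT => h; have [jm|jm] := Hm j (mem_enum _ _) h.
  by move: mj; rewrite jm ltnn.
by move: (ltn_trans mj jm); rewrite ltnn.
Qed.

Lemma vvecE (i : 'I_n) g0 : vvec T i g0 = fv (Jop T i) g0.
Proof. by []. Qed.

Lemma svec_key (i : 'I_n) g0 : red (Jop T i) g0 -> keyrel (svec T i g0) (i, g0).
Proof.
move=> rg; have [hJ _] := JopP wf_G redT i.
split => /=.
- rewrite svec_i vvecE; apply/eqP => E; have := fv_coeff_g hJ rg.
  by rewrite E mcoeff0 => /eqP; rewrite eq_sym oner_eq0.
- by move=> j ij; exact: svec_gt.
- by rewrite svec_i vvecE (fv_ltm hJ rg).
Qed.

Lemma Bkey b : Bset T n b -> exists (i : 'I_n) g0,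
  [/\ (0 < i)%N, red (Jop T i) g0, b = svec T i g0 & keyrel b (i, g0)].
Proof.
move/BsetP => [i [g0 [h1 _ h3 ->]]]; exists i, g0; split => //.
exact: svec_key.
Qed.

Definition ltB (b1 b2 : tup) := exists p1 p2, [/\ keyrel b1 p1, keyrel b2 p2 & lexlt p1 p2].

Lemma indep_aux m : forall (s : seq tup) (c : tup -> K), (size s <= m)%N -> uniq s ->
  (forall b, b \in s -> Bset T n b) -> \sum_(b <- s) c b *: b = 0 ->
  forall b, b \in s -> c b = 0.
Proof.
elim: m => [|m IH] s c; first by case: s.
move=> sz us Bs S0.
have [sn|ne] := eqVneq s [::]; first by rewrite sn.
have ex : exists x, x \in s /\ True.
  by case: s ne {sz us Bs S0} => [|x s'] // _; exists x; rewrite mem_head.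
have Htr : forall x y z, x \in s -> y \in s -> z \in s -> ltB x y -> ltB y z -> ltB x z.
  move=> x y z _ _ _ [p1 [p2 [k1 k2 l12]]] [q2 [q3 [k2' k3 l23]]].
  have e2 := keyrel_uniq k2 k2'; subst q2.
  exists p1, q3; split => //; exact: lexlt_trans l12 l23.
have Hto : forall x y, x \in s -> y \in s -> x != y -> ltB x y \/ ltB y x.
  move=> x y xs ys xy.
  have [i1 [g1 [_ _ e1 k1]]] := Bkey (Bs x xs).
  have [i2 [g2 [_ _ e2 k2]]] := Bkey (Bs y ys).
  have pne : (i1, g1) != (i2, g2).
    apply: contra xy => /eqP [ei eg]; by rewrite e1 e2 ei eg.
  case/orP: (lexlt_total pne) => h; [left|right]; by [exists (i1, g1), (i2, g2)|exists (i2, g2), (i1, g1)].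
have [mx [ms _ Hm]] := @seq_max _ ltB s (fun _ => True) Htr Hto ex.
have [i0 [g0 [_ rg0 mE km]]] := Bkey (Bs mx ms).
have [hJ _] := JopP wf_G redT i0.
have C : ((\sum_(b <- s) c b *: b) i0)@_g0 = \sum_(b <- s) c b * (b i0)@_g0.
  by rewrite sum_ffunE raddf_sum /=; apply: eq_bigr => b _; rewrite ffunE mcoeffZ.
have cm : c mx = 0.
  move: C; rewrite S0 ffunE mcoeff0 (bigD1_seq mx ms us) /= big1_seq ?addr0; last first.
    move=> b /andP [bm bs]; case: (Hm b bs I) => [e|[p1 [p2 [k1 k2 l]]]].
      by rewrite e eqxx in bm.
    have p2E := keyrel_uniq k2 km; subst p2.
    case: p1 k1 l => [i1 g1] [/= n1 z1 l1]; rewrite /lexlt /= => /orP [ii|/andP [/eqP ii gg]].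
      by rewrite (z1 _ ii) mcoeff0 mulr0.
    subst i1; rewrite mcoeff_outdom ?mulr0 //; apply/negP => /(proj2 (ltm_Some l1)).
    by rewrite leNgt gg.
  by rewrite mE svec_i vvecE (fv_coeff_g hJ rg0) mulr1 => ->.
have S1 : \sum_(b <- rem mx s) c b *: b = 0.
  rewrite (rem_filter _ us) big_filter.
  by move: S0; rewrite (bigD1_seq mx ms us) /= cm scale0r add0r.
have us' : uniq (rem mx s) by rewrite rem_uniq.
have sz' : (size (rem mx s) <= m)%N by rewrite size_rem // -ltnS (leq_trans _ sz) // prednK // lt0n size_eq0.
have Bs' : forall b, b \in rem mx s -> Bset T n b.
  by move=> b; rewrite (mem_rem_uniq _ us) inE => /andP [_ /Bs].
move=> b bs; have [->//|bm] := eqVneq b mx.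
by apply: (IH _ c sz' us' Bs' S1); rewrite (mem_rem_uniq _ us) inE bm bs.
Qed.
Lemma ffunBZ (x y : tup) c k : (x - c *: y) k = x k - c *: y k.
Proof. by rewrite !ffunE. Qed.

Definition spanU (w : tup) := exists (s : seq tup) (c : tup -> K),
  [/\ uniq s, forall b, b \in s -> Bset T n b & w = \sum_(b <- s) c b *: b].

Lemma span_add w c0 (v : tup) : spanU w -> Bset T n v -> spanU (w + c0 *: v).
Proof.
move=> [s [c [us Bs ->]]] Bv.
have [vs|vns] := boolP (v \in s).
  exists s, (fun b => c b + (if b == v then c0 else 0)); split => //.
  under [RHS]eq_bigr => b _ do rewrite scalerDl.
  rewrite big_split /=; congr (_ + _).
  rewrite (bigD1_seq v vs us) /= eqxx big1 ?addr0 // => b bv.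
  by rewrite (negbTE bv) scale0r.
exists (v :: s), (fun b => if b == v then c0 else c b); split.
- by rewrite /= vns us.
- by move=> b; rewrite inE => /orP [/eqP ->|/Bs].
- rewrite big_cons eqxx addrC; congr (_ + _); apply: eq_big_seq => b bs.
  have -> : (b == v) = false by apply/negbTE; apply: contra vns => /eqP <-.
  by [].
Qed.

Lemma span_main p : forall w, syz T w -> keyrel w p -> spanU w.
Proof.
elim/(well_founded_ind (lexlt_wf wf_G (n:=n))): p => -[i g] IH w sw [/= ni zi li].
have [hJ HJ] := JopP wf_G redT i.
have [hU HU] := UopP wf_G redT i.
have sk : sumker T i (w i).
  exists (fun j => - w j); split => [j|].
    by rewrite (TN (redT j)) (proj1 sw j) oppr0.
  have R : \sum_(j < n | ~~ (j < i)%N) w j = w i.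
    rewrite (bigD1 i) ?ltnn //= big1 ?addr0 // => j /andP [ji jni].
    apply: zi; rewrite ltn_neqAle (leqNgt i j) ji andbT.
    by apply: contra jni => /eqP e; apply/eqP; apply: val_inj.
  have := proj2 sw; rewrite (bigID (fun j : 'I_n => (j < i)%N)) /= R.
  by rewrite sumrN addrC => /eqP; rewrite addr_eq0 => /eqP.
have Ui : Uop T i (w i) = 0 by apply/HU.
have Ji : Jop T i (w i) = 0 by apply/HJ; split => //; exact: (proj1 sw i).
have rg : red (Jop T i) g := ker_ltm_red hJ Ji li.
have i0 : (0 < i)%N.
  rewrite lt0n; apply/negP => /eqP i0; move: ni; apply/negP; rewrite negbK.
  have := proj2 sw; rewrite (bigD1 i) //= big1 ?addr0 => [->//|j ji]; apply: zi.
  rewrite i0 lt0n; apply: contra ji => /eqP j0; apply/eqP; apply: val_inj; by rewrite /= j0 i0.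
set c := (w i)@_g.
set w' := w - c *: svec T i g.
have sw' : syz T w'.
  have -> : w' = (- c) *: svec T i g + w by rewrite /w' scaleNr addrC.
  exact: syzZD (svec_syz i g) sw.
have Bv : Bset T n (svec T i g) by apply/BsetP; exists i, g; split.
have wE : w = w' + c *: svec T i g by rewrite /w' subrK.
have [w0|nz] := eqVneq w' 0.
  exists [:: svec T i g], (fun _ => c); split => //.
    by move=> b; rewrite inE => /eqP ->.
  by rewrite big_cons big_nil addr0 wE w0 add0r.
have [[i' g'] kp] := key_exists nz.
have lt : lexlt (i', g') (i, g).
  case: kp => /= n' z' l'.
  have i'le : (i' <= i)%N.
    rewrite leqNgt; apply/negP => lt; move: n'.
    by rewrite /w' ffunBZ (zi _ lt) (svec_gt _ lt) scaler0 subrr eqxx.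
  move: i'le; rewrite leq_eqVlt => /orP [/eqP ii|ii]; last by rewrite /lexlt /= ii.
  have ii' : i' = i by apply: val_inj.
  subst i'; rewrite /lexlt /= ltnn eqxx /=.
  have wi : w' i = w i - c *: vvec T i g by rewrite /w' ffunBZ svec_i.
  rewrite wi in l'; have [g'in Hg'] := ltm_Some l'.
  have g'le : (g' <= g)%O.
    case/msupp_B: g'in => [|/(fsubsetP (msuppZ_le _ _))].
      by move/(proj2 (ltm_Some li)).
    by rewrite vvecE => /(fv_supp hJ).
  rewrite lt_neqAle g'le andbT; apply/eqP => gg; move: g'in.
  by rewrite gg msupp_neq mcoeffB mcoeffZ vvecE (fv_coeff_g hJ rg) mulr1 subrr eqxx.
have := span_add c (IH _ lt w' sw' kp) Bv.
by rewrite -wE.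
Qed.
End Main.

Unset Implicit Arguments.

Theorem mainTheorem3 (K : fieldType) (d : Order.disp_t) (G : orderType d)
    (wf_G : well_founded (fun x y : G => (x < y)%O))
    (n : nat) (T : 'I_n -> {malg K[G]} -> {malg K[G]})
    (n_gt0 : (0 < n)%N) (redT : forall j, is_redop (T j)) :
  is_basis (syz T) (Bset T n).
Proof.
split.
- move=> b /BsetP [i [g0 [_ _ _ ->]]]; exact: svec_syz.
- move=> s c us Bs S0; exact: (indep_aux wf_G redT (leqnn (size s)) us Bs S0).
- move=> w sw; have [->|nz] := eqVneq w 0.
    by exists [::], (fun _ => 0); rewrite big_nil.
  have [p kp] := key_exists nz.
  have [s [c [_ Bs E]]] := span_main wf_G redT sw kp.
  by exists s, c.
Qed.
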